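(* Let $\Gamma$ be block-finite and $\mathbb G,\mathbb G^*$ as below. Suppose $\hat x\in\mathrm{Range}_1(\mathbb G^* )$, $x\in\mathbb G(\hat x)$, and $f\in\langle\Gamma\rangle$ is an $m$-ary function with $\arg\min f=\mathbb G(\hat x)$. Then $(a,\dots,a)\in\mathrm{dom} f$ for every $a\in\{x_1,\dots,x_m\}$.
   Context: $D$ finite, $m\ge2$, cost functions $f:D^n\to\mathbb Q\cup\{\infty\}$, $\mathrm{dom} f=\{x:f(x)<\infty\}$. Block-finite: $D$ partitioned into $\{D_v:v\in V\}$ with (a) for each $a\in D_v$ a unary $g_a:D\to D$ mapping $\mathrm{dom} f$ into itself for all $f\in\Gamma$, $g_a(b)=a$ for $b\in D_v$; (b) $\mathrm{dom} f\in\Gamma$ for $f\in\Gamma$ and equality $=_D\in\Gamma$; (c) each $n$-ary $f\in\Gamma\setminus\{=_D\}$ has $\mathrm{dom} f\subseteq D_{v_1}\times\dots\times D_{v_n}$. $\langle\Gamma\rangle$: functions $f(x_1,\dots,x_k)=\min_{x_{k+1},\dots,x_N}f_{\mathcal I}(x_1,\dots,x_N)$ for $\mathrm{VCSP}(\Gamma)$ objectives $f_{\mathcal I}$. Maps $\mathbf g=(g_1,\dots,g_m):D^m\to D^m$ act on $[D^n]^m$ coordinatewise; $f^m(x)=\frac1m\sum f(x^i)$; generalized fractional polymorphism of arity $m\to m$: finitely supported distribution $\rho$ on maps with $\sum\rho(\mathbf g)f^m(\mathbf g(x))\le f^m(x)$ for $f\in\Gamma$, $x\in[\mathrm{dom}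 f]^m$. $\Omega=\{\mathbf g:(g_{\pi(1)},\dots,g_{\pi(m)})(x)=\mathbf g(x_{\pi(1)},\dots,x_{\pi(m)})\ \forall x\in D^m,\pi\}$. $\omega$: generalized fractional polymorphism of arity $m\to m$ with support in $\Omega$ containing the support of every other such. $\mathbb G=\{\mathbf g_k\circ\dots\circ\mathbf g_1:k\ge0,\mathbf g_i\in\mathrm{supp}(\omega)\}$; $E=\{(\mathbf g,\mathbf h\circ\mathbf g):\mathbf g\in\mathbb G,\mathbf h\in\mathrm{supp}(\omega)\}$; $\mathbb G^*$ the union of strongly connected components of $(\mathbb G,E)$ without outgoing edges; $\mathrm{Range}_1(\mathbb G^* )=\{\mathbf g(y):\mathbf g\in\mathbb G^*,y\in D^m\}$; $\mathbb G(\hat x)=\{\mathbf g(\hat x):\mathbf g\in\mathbb G\}$. *)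

(* Defs.v *)
From HB Require Import structures.
From Stdlib Require Import List.
From mathcomp Require Import all_boot all_order all_algebra all_fingroup.
Set Implicit Arguments. Unset Strict Implicit. Unset Printing Implicit Defensive.
Import Order.TTheory GRing.Theory Num.Theory.
Local Open Scope ring_scope.

(* Extended rationals Q ∪ {∞}: [Some q] = q, [None] = ∞. *)
Definition extQ := option rat.
Definition eadd (a b : extQ) : extQ :=
  match a, b with Some x, Some y => Some (x + y) | _, _ => None end.
Definition escale (w : rat) (a : extQ) : extQ := omap (fun x => w * x) a.
Definition ele (a b : extQ) : bool :=
  match a, b with
  | _, None => true
  | None, Some _ => false
  | Some x, Some y => x <= y
  end.
Definition emin (a b : extQ) : extQ := if ele a b then a else b.
Definition esum (s : seq extQ) : extQ := foldr eadd (Some 0) s.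

Section Defs.
Variable D : finType.

Definition language := forall n : nat, (n.-tuple D -> extQ) -> Prop.

Definition dom_fun n (f : n.-tuple D -> extQ) : n.-tuple D -> extQ :=
  fun x => if f x is Some _ then Some 0 else None.

Definition eqD_seq (s : seq D) : extQ :=
  match s with [:: a; b] => if a == b then Some 0 else None | _ => None end.
Definition eqD : 2.-tuple D -> extQ := fun x => eqD_seq x.
Definition isEqD n (f : n.-tuple D -> extQ) : Prop :=
  n = 2%N /\ forall x : n.-tuple D, f x = eqD_seq x.

(* Block-finiteness w.r.t. the partition of D into the fibres of blk. *)
Definition block_finite (G : language) (V : Type) (blk : D -> V) : Prop :=
  [/\ (forall a : D, exists g : D -> D,
          (forall n f, G n f -> forall x : n.-tuple D,
              f x != None -> f (map_tuple g x) != None)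
          /\ (forall b, blk b = blk a -> g b = a)),
      (forall n f, G n f -> G n (dom_fun f)),
      G 2%N eqD
    & (forall n f, G n f -> ~ isEqD f ->
          exists vs : n.-tuple V, forall x : n.-tuple D, f x != None ->
            forall i, blk (tnth x i) = tnth vs i)].

Record constr (N : nat) := Constr {
  c_ar : nat; c_fun : c_ar.-tuple D -> extQ; c_scope : c_ar.-tuple 'I_N }.

Definition inst_obj N (I : seq (constr N)) (y : N.-tuple D) : extQ :=
  esum [seq @c_fun _ c (map_tuple (tnth y) (@c_scope _ c)) | c <- I].

Definition expressible (G : language) k (f : k.-tuple D -> extQ) : Prop :=
  exists (N : nat) (I : seq (constr (k + N))),
    (forall c, In c I -> G (c_ar c) (@c_fun _ c)) /\
    forall x : k.-tuple D,
      f x = \big[emin/None]_(z : N.-tuple D) inst_obj I (cat_tuple x z).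

Definition argmin k (f : k.-tuple D -> extQ) : {set k.-tuple D} :=
  [set x | (f x != None) && [forall y, ele (f x) (f y)]].

Variable m : nat.

Definition Map := {ffun m.-tuple D -> m.-tuple D}.
Definition idm : Map := [ffun x => x].
Definition comp (h g : Map) : Map := [ffun x => h (g x)].

(* coordinatewise action of g on [D^n]^m (applied to each column) *)
Definition apply_map n (g : Map) (x : m.-tuple (n.-tuple D))
  : m.-tuple (n.-tuple D) :=
  [tuple [tuple tnth (g [tuple tnth (tnth x k) j | k < m]) i | j < n] | i < m].

Definition fm n (f : n.-tuple D -> extQ) (x : m.-tuple (n.-tuple D)) : extQ :=
  escale (m%:R^-1) (esum (map f x)).

(* generalized fractional polymorphism of arity m -> m, given as a finite
   list of (weight, map) pairs with positive weights summing to 1 *)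
Definition gfp (G : language) (rho : seq (rat * Map)) : Prop :=
  [/\ (forall p, p \in rho -> 0 < p.1),
      \sum_(p <- rho) p.1 = 1
    & forall n f, G n f -> forall x : m.-tuple (n.-tuple D),
        (forall i, f (tnth x i) != None) ->
        ele (esum [seq escale p.1 (fm f (apply_map p.2 x)) | p <- rho]) (fm f x)].

Definition supp (rho : seq (rat * Map)) : {set Map} :=
  [set g | g \in map snd rho].

Definition perm_tuple (pi : 'S_m) (x : m.-tuple D) : m.-tuple D :=
  [tuple tnth x (pi i) | i < m].

Definition inOmega (g : Map) : Prop :=
  forall (pi : 'S_m) (x : m.-tuple D), g (perm_tuple pi x) = perm_tuple pi (g x).

Definition is_omega (G : language) (w : seq (rat * Map)) : Prop :=
  [/\ gfp G w,
      (forall g, g \in supp w -> inOmega g)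
    & forall rho, gfp G rho -> (forall g, g \in supp rho -> inOmega g) ->
        supp rho \subset supp w].

Definition Gstep (S : {set Map}) : rel Map :=
  fun a b => [exists h in S, b == comp h a].
Definition GG (S : {set Map}) : {set Map} := [set g | connect (Gstep S) idm g].
Definition Erel (S : {set Map}) : rel Map :=
  fun a b => (a \in GG S) && Gstep S a b.
Definition scc (S : {set Map}) (g : Map) : {set Map} :=
  [set h | connect (Erel S) g h && connect (Erel S) h g].
(* union of the strongly connected components without outgoing edges *)
Definition Gstar (S : {set Map}) : {set Map} :=
  [set g in GG S | [forall h, forall h',
      (h \in scc S g) && Erel S h h' ==> (h' \in scc S g)]].
Definition Range1 (S : {set Map}) : {set m.-tuple D} :=
  [set y | [exists g in Gstar S, [exists z, y == g z]]].
Definition Gorbit (S : {set Map}) (xh : m.-tuple D) : {set m.-tuple D} :=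
  (fun g : Map => g xh) @: GG S.

End Defs.

(* Main.v *)
Require Import Defs.
From HB Require Import structures.
From mathcomp Require Import all_boot all_order all_algebra all_fingroup.
From Stdlib Require Import ClassicalEpsilon.
From Stdlib Require List.
Set Implicit Arguments. Unset Strict Implicit. Unset Printing Implicit Defensive.
Import Order.TTheory GRing.Theory Num.Theory.

Lemma eadd_neq (a b : extQ) : eadd a b != None -> a != None /\ b != None.
Proof. by case: a; case: b. Qed.

Lemma eadd_neq2 (a b : extQ) : a != None -> b != None -> eadd a b != None.
Proof. by case: a; case: b. Qed.

Lemma emin_neq (a b : extQ) : emin a b != None -> a != None \/ b != None.
Proof. case: a => [a|]; case: b => [b|] //=; rewrite /emin /=; auto. Qed.

Lemma emin_neq2 (a b : extQ) : a != None \/ b != None -> emin a b != None.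
Proof.
case: a => [a|]; case: b => [b|] //=; rewrite /emin /=; try by case: ifP.
by case.
Qed.

Lemma big_emin_ex (T : finType) (F : T -> extQ) :
  \big[emin/None]_(z : T) F z != None -> exists z, F z != None.
Proof.
rewrite unlock /=.
elim: (index_enum T) => [|i s IH] //= /emin_neq [H|H]; first by exists i.
exact: IH.
Qed.

Lemma big_emin_ex2 (T : finType) (F : T -> extQ) z :
  F z != None -> \big[emin/None]_(z : T) F z != None.
Proof.
move=> Hz; have : z \in index_enum T by rewrite mem_index_enum.
rewrite unlock /=.
elim: (index_enum T) => [|i s IH] //=; rewrite inE => /orP [/eqP<-|Hs].
  by apply: emin_neq2; left.
by apply: emin_neq2; right; apply: IH.
Qed.

Section Dom.
Variable D : finType.
Variable G : Defs.language D.
Variable g : D -> D.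
Hypothesis Hg : forall n f, @G n f -> forall x : n.-tuple D,
              f x != None -> f (map_tuple g x) != None.

Lemma inst_dom N (I : seq (Defs.constr D N)) (y : N.-tuple D) :
  (forall c, List.In c I -> @G (c_ar c) (@c_fun _ _ c)) ->
  inst_obj I y != None -> inst_obj I (map_tuple g y) != None.
Proof.
rewrite /inst_obj /esum.
elim: I => [|c I IH] //= HI /eadd_neq [H1 H2].
apply: eadd_neq2; last by apply: IH => // c' Hc'; apply: HI; right.
have -> : map_tuple (tnth (map_tuple g y)) (c_scope c)
        = map_tuple g (map_tuple (tnth y) (c_scope c)).
  by apply: eq_from_tnth => i; rewrite !tnth_map.
by apply: Hg => //; apply: HI; left.
Qed.

Lemma expr_dom k (f : k.-tuple D -> extQ) (x : k.-tuple D) :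
  expressible G f -> f x != None -> f (map_tuple g x) != None.
Proof.
case=> N [I [HI Hf]]; rewrite !Hf => /big_emin_ex [z Hz].
apply: (@big_emin_ex2 _ _ (map_tuple g z)).
have -> : cat_tuple (map_tuple g x) (map_tuple g z) = map_tuple g (cat_tuple x z).
  by apply: val_inj; rewrite /= map_cat.
exact: inst_dom.
Qed.
End Dom.

Section Mod.
Variables (D : finType) (m : nat) (V : Type) (blk : D -> V) (a : D).

Definition sb (y : m.-tuple D) : Prop := forall i j, blk (tnth y i) = blk (tnth y j).
Definition cst : m.-tuple D := [tuple a | _ < m].

Definition modm (g : Map D m) : Map D m :=
  [ffun y => if excluded_middle_informative (sb y \/ a \notin y) then g y else cst].

Lemma modm_eq g y : sb y \/ a \notin y -> modm g y = g y.
Proof. by move=> H; rewrite ffunE; case: excluded_middle_informative. Qed.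

Lemma modm_cst g y : ~ sb y -> a \in y -> modm g y = cst.
Proof.
move=> H1 H2; rewrite ffunE; case: excluded_middle_informative => // -[] //.
by rewrite H2.
Qed.

Lemma sb_perm (pi : 'S_m) y : sb (perm_tuple pi y) <-> sb y.
Proof.
split => H i j; last by rewrite !tnth_mktuple.
have := H (pi^-1 i)%g (pi^-1 j)%g; by rewrite !tnth_mktuple !permKV.
Qed.

Lemma mem_perm (pi : 'S_m) y : (a \in perm_tuple pi y) = (a \in y).
Proof.
apply/tnthP/tnthP => -[i Hi].
  by exists (pi i); rewrite Hi tnth_mktuple.
by exists (pi^-1 i)%g; rewrite Hi tnth_mktuple permKV.
Qed.

Lemma modm_Omega g : inOmega g -> inOmega (modm g).
Proof.
move=> Hg pi y.
case: (excluded_middle_informative (sb y \/ a \notin y)) => H.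
  have H' : sb (perm_tuple pi y) \/ a \notin perm_tuple pi y.
    by rewrite sb_perm mem_perm.
  rewrite (modm_eq g H') (modm_eq g H); exact: Hg.
have [H1 H2] : ~ sb y /\ a \in y.
  by split; [move=> ?; apply: H; left | apply/negPn/negP => ?; apply: H; right].
have H1' : ~ sb (perm_tuple pi y) by rewrite sb_perm.
have H2' : a \in perm_tuple pi y by rewrite mem_perm.
rewrite (modm_cst g H1' H2') (modm_cst g H1 H2).
by apply: eq_from_tnth => i; rewrite !tnth_mktuple.
Qed.
End Mod.

Lemma esum0 (s : seq extQ) : (forall e, e \in s -> e = Some 0%R) -> esum s = Some 0%R.
Proof.
elim: s => [|e s IH] //= H; rewrite /esum /= -/(esum s) IH; last first.
  by move=> e' He'; apply: H; rewrite inE He' orbT.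
by rewrite (H e) ?inE ?eqxx //= addr0.
Qed.

Section G.
Variables (D : finType) (m : nat) (V : Type) (blk : D -> V) (a : D).

Lemma eqD_tuple (r : 2.-tuple D) :
  eqD_seq r = if tnth r (@Ordinal 2 0 isT) == tnth r (@Ordinal 2 1 isT)
              then Some 0%R else None.
Proof. by case: r => [[|u [|v [|? ?]]] //] Hs. Qed.

Lemma apply_modm n (g : Map D m) (X : m.-tuple (n.-tuple D)) (vs : n.-tuple V) :
  (forall k j, blk (tnth (tnth X k) j) = tnth vs j) ->
  apply_map (modm blk a g) X = apply_map g X.
Proof.
move=> H; apply: eq_from_tnth => i; rewrite !tnth_mktuple.
apply: eq_from_tnth => j; rewrite !tnth_mktuple modm_eq //; left => k1 k2.
by rewrite !tnth_mktuple !H.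
Qed.

Lemma gfp_modm (G : language D) (w : seq (rat * Map D m)) :
  block_finite G blk -> gfp G w ->
  gfp G [seq (p.1, modm blk a p.2) | p <- w].
Proof.
case=> _ _ _ Hc [Hpos Hsum Hineq]; split.
- by move=> p /mapP [q Hq ->] /=; apply: Hpos.
- by rewrite big_map.
move=> n f Gf X HX.
case: (classic (isEqD f)) => [[hn Hf]|Hne].
  subst n.
  have HXr : forall k, tnth (tnth X k) (@Ordinal 2 0 isT) = tnth (tnth X k) (@Ordinal 2 1 isT).
    move=> k; have := HX k; rewrite Hf eqD_tuple.
    by case: ifP => // /eqP.
  have Hfm : forall Y : m.-tuple (2.-tuple D),
      (forall k, tnth (tnth Y k) (@Ordinal 2 0 isT) = tnth (tnth Y k) (@Ordinal 2 1 isT)) ->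
      fm f Y = Some 0%R.
    move=> Y HY; rewrite /fm esum0 /= ?mulr0 // => e /mapP [r /tnthP [k ->] ->].
    by rewrite Hf eqD_tuple HY eqxx.
  rewrite (Hfm X HXr) esum0 //= => e /mapP [p _ ->].
  rewrite Hfm; first by rewrite /= mulr0.
  move=> k.
  rewrite !tnth_mktuple; congr (tnth _ _); congr (_ _).
  by apply: eq_from_tnth => k'; rewrite !tnth_mktuple HXr.
have [vs Hvs] := Hc n f Gf Hne.
have HB : forall k j, blk (tnth (tnth X k) j) = tnth vs j.
  by move=> k j; apply: Hvs.
have -> : [seq escale p.1 (fm f (apply_map p.2 X)) | p <- [seq (p.1, modm blk a p.2) | p <- w]]
   = [seq escale p.1 (fm f (apply_map p.2 X)) | p <- w].
  by rewrite -map_comp; apply: eq_map => p /=; rewrite (apply_modm _ HB).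
exact: Hineq.
Qed.
End G.

Theorem lemma7p4 (D : finType) (m : nat) (G : language D) (V : Type)
    (blk : D -> V) (w : seq (rat * Map D m)) (xh x : m.-tuple D)
    (f : m.-tuple D -> extQ) :
  (1 < m)%N ->
  block_finite G blk ->
  is_omega G w ->
  xh \in Range1 (supp w) ->
  x \in Gorbit (supp w) xh ->
  expressible G f ->
  argmin f = Gorbit (supp w) xh ->
  forall a : D, a \in x -> f [tuple a | _ < m] != None.
Proof.
move=> _ Hbf Hom _ Hx Hexp Harg a Ha.
have Hfx : f x != None.
  by move: Hx; rewrite -Harg inE => /andP [].
case: (classic (sb blk x)) => Hsb.
  case: Hbf => Ha' _ _ _; have [g [Hg Hga]] := Ha' a.
  have := expr_dom Hg Hexp Hfx.
  have -> // : map_tuple g x = [tuple a | _ < m].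
  apply: eq_from_tnth => i; rewrite tnth_map tnth_mktuple; apply: Hga.
  by case/tnthP: Ha => i0 ->; apply: Hsb.
case: Hom => [Hgfp Hin Hmax].
have Hgfp' := gfp_modm a Hbf Hgfp.
case Ew: w => [|p0 w0].
  by move: Hgfp; rewrite Ew => -[_]; rewrite big_nil.
set w' := [seq (p.1, modm blk a p.2) | p <- w].
have Hom' : forall g, g \in supp w' -> inOmega g.
  move=> g; rewrite inE -map_comp => /mapP [p Hp ->] /=.
  by apply: modm_Omega; apply: Hin; rewrite inE; apply: map_f.
have Hsub := Hmax w' Hgfp' Hom'.
set h := modm blk a p0.2.
have hsupp : h \in supp w.
  apply: (subsetP Hsub); rewrite inE -map_comp; apply: (map_f (snd \o _)).
  by rewrite Ew inE eqxx.
case/imsetP: Hx => k Hk Exk.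
have : [tuple a | _ < m] \in Gorbit (supp w) xh.
  apply/imsetP; exists (Defs.comp h k).
    rewrite inE; apply: (connect_trans (y := k)); first by move: Hk; rewrite inE.
    apply: connect1; apply/existsP; exists h; by rewrite hsupp eqxx.
  rewrite ffunE -Exk modm_cst //.
by rewrite -Harg inE => /andP [].
Qed.
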